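(* Let $d\le n$, $\gamma>1$, and $\lambda_1,\lambda_2>0$ with $\lambda_1+\lambda_2=1$. For every $v\in\mathbb R^d$ with $\|v\|_2\le1$ there exist $\mathbf X_1,\mathbf X_2\in\mathfrak X(\gamma)$ and $1$-sparse $\beta_1,\beta_2\in\mathbb R^d$ such that, with $\Sigma_k=\frac1n\mathbf X_k^\top\mathbf X_k$, 1. $\lambda_1\Sigma_1+\lambda_2\Sigma_2=I_d$, and 2. $\lambda_1\Sigma_1\beta_1+\lambda_2\Sigma_2\beta_2=v=\vartheta_{\boldsymbol\lambda}$, where $\vartheta_{\boldsymbol\lambda}=\arg\min_{\vartheta}\sum_{k=1}^2\lambda_k\|\mathbf X_k(\vartheta-\beta_k)\|_2^2$.
   Context: $\mathfrak X(\gamma)=\{\mathbf X\in\mathbb R^{n\times d}:\gamma^{-1}I_d\preceq n^{-1}\mathbf X^\top\mathbf X\preceq\gamma I_d\}$. A vector is $1$-sparse if it has at most one nonzero entry. *)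

(* Defs.v *)
From mathcomp Require Import all_boot all_order all_algebra.
From mathcomp Require Import reals.
Set Implicit Arguments. Unset Strict Implicit. Unset Printing Implicit Defensive.
Import Order.TTheory GRing.Theory Num.Theory.
Local Open Scope ring_scope.

Section Defs.
Variable R : realType.

Definition Sigma (n d : nat) (X : 'M[R]_(n, d)) : 'M[R]_d :=
  (n%:R)^-1 *: (X^T *m X).

Definition psd (d : nat) (A : 'M[R]_d) : Prop :=
  forall x : 'cV[R]_d, 0 <= (x^T *m A *m x) ord0 ord0.

Definition loewner_le (d : nat) (A B : 'M[R]_d) : Prop := psd (B - A).

Definition Xclass (n d : nat) (gamma : R) (X : 'M[R]_(n, d)) : Prop :=
  loewner_le (gamma^-1 *: 1%:M) (Sigma X) /\ loewner_le (Sigma X) (gamma *: 1%:M).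

Definition sqnorm (m : nat) (u : 'cV[R]_m) : R := \sum_(i < m) u i ord0 ^+ 2.

Definition norm2 (m : nat) (u : 'cV[R]_m) : R := Num.sqrt (sqnorm u).

Definition one_sparse (d : nat) (b : 'cV[R]_d) : Prop :=
  (#|[set i : 'I_d | b i ord0 != 0%R]| <= 1)%N.

Definition obj2 (n d : nat) (l1 l2 : R) (X1 X2 : 'M[R]_(n, d))
  (b1 b2 theta : 'cV[R]_d) : R :=
  l1 * norm2 (X1 *m (theta - b1)) ^+ 2 + l2 * norm2 (X2 *m (theta - b2)) ^+ 2.

Definition is_argmin2 (n d : nat) (l1 l2 : R) (X1 X2 : 'M[R]_(n, d))
  (b1 b2 theta : 'cV[R]_d) : Prop :=
  (forall t, obj2 l1 l2 X1 X2 b1 b2 theta <= obj2 l1 l2 X1 X2 b1 b2 t) /\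
  (forall t, obj2 l1 l2 X1 X2 b1 b2 t <= obj2 l1 l2 X1 X2 b1 b2 theta -> t = theta).

End Defs.

(* Main.v *)
Require Import Defs.
From mathcomp Require Import all_boot all_order all_algebra.
From mathcomp Require Import reals ring lra.
Import Order.TTheory GRing.Theory Num.Theory.
Local Open Scope ring_scope.
Set Implicit Arguments. Unset Strict Implicit. Unset Printing Implicit Defensive.
Section S.
Variable R : realType.
Lemma quad_exp d (S : 'M[R]_d) (y h : 'cV[R]_d) : S^T = S ->
  (y + h)^T *m S *m (y + h) = y^T *m S *m y + 2%:R *: (h^T *m S *m y) + h^T *m S *m h.
Proof.
move=> sS.
have e : y^T *m S *m h = h^T *m S *m y.
  rewrite [LHS]mx11_scalar [RHS]mx11_scalar; congr (_%:M).
  have := congr1 (fun A : 'M[R]_1 => A ord0 ord0) (trmx_mul (y^T *m S) h).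
  by rewrite mxE => ->; rewrite trmx_mul trmxK sS mulmxA mxE.
rewrite !linearD /= !mulmxDl e.
by rewrite scaler_nat mulr2n !addrA.
Qed.
Lemma sqnormE m (u : 'cV[R]_m) : u^T *m u = (sqnorm u)%:M.
Proof.
apply/matrixP => i j; rewrite !ord1 !mxE eqxx mulr1n /sqnorm.
by apply: eq_bigr => k _; rewrite !mxE expr2.
Qed.
Lemma sqnorm_ge0 m (u : 'cV[R]_m) : 0 <= sqnorm u.
Proof. by apply: sumr_ge0 => i _; rewrite sqr_ge0. Qed.
Lemma norm2_sq m (u : 'cV[R]_m) : norm2 u ^+ 2 = sqnorm u.
Proof. by rewrite /norm2 sqr_sqrtr // sqnorm_ge0. Qed.
Lemma sigma_sym n d (X : 'M[R]_(n,d)) : (Sigma X)^T = Sigma X.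
Proof. by rewrite /Sigma linearZ /= trmx_mul trmxK. Qed.
Lemma sqnormX n d (X : 'M[R]_(n,d)) u : (0 < n)%N ->
  sqnorm (X *m u) = n%:R * (u^T *m Sigma X *m u) ord0 ord0.
Proof.
move=> n0.
have -> : u^T *m Sigma X *m u = n%:R^-1 *: ((X *m u)^T *m (X *m u)).
  by rewrite /Sigma trmx_mul -scalemxAr -scalemxAl !mulmxA.
rewrite sqnormE mxE [in RHS]mxE eqxx mulr1n mulrA mulfV ?mul1r // pnatr_eq0 -lt0n //.
Qed.

Lemma obj_dec n d (l1 l2 : R) (X1 X2 : 'M[R]_(n,d)) b1 b2 v t : (0 < n)%N ->
  l1 *: Sigma X1 + l2 *: Sigma X2 = 1%:M ->
  l1 *: (Sigma X1 *m b1) + l2 *: (Sigma X2 *m b2) = v ->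
  obj2 l1 l2 X1 X2 b1 b2 t = obj2 l1 l2 X1 X2 b1 b2 v + n%:R * sqnorm (t - v).
Proof.
move=> n0 H1 H2.
rewrite /obj2 !norm2_sq !sqnormX //.
set h := t - v.
have ht : forall b, t - b = (v - b) + h.
  by move=> b; rewrite /h [RHS]addrC addrA subrK.
rewrite !ht (@quad_exp _ _ (v - b1) h) ?sigma_sym // (@quad_exp _ _ (v - b2) h) ?sigma_sym //.
set S1 := Sigma X1 in H1 H2 *; set S2 := Sigma X2 in H1 H2 *.
have K0 : l1 *: (S1 *m (v - b1)) + l2 *: (S2 *m (v - b2)) = 0.
  rewrite !mulmxBr !scalerBr addrACA -opprD H2 !scalemxAl -mulmxDl H1 mul1mx subrr //.
have K1 : l1 *: (h^T *m S1 *m (v - b1)) + l2 *: (h^T *m S2 *m (v - b2)) = 0.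
  by rewrite -!mulmxA (scalemxAr l1 h^T) (scalemxAr l2 h^T) -mulmxDr K0 mulmx0.
have K2 : l1 *: (h^T *m S1 *m h) + l2 *: (h^T *m S2 *m h) = (sqnorm h)%:M.
  by rewrite -sqnormE -!mulmxA (scalemxAr l1 h^T) (scalemxAr l2 h^T) -mulmxDr !scalemxAl -mulmxDl H1 mul1mx.
set P1 := h^T *m S1 *m (v - b1) in K1 *; set P2 := h^T *m S2 *m (v - b2) in K1 *.
set Q1 := h^T *m S1 *m h in K2 *; set Q2 := h^T *m S2 *m h in K2 *.
set A1 := (v - b1)^T *m S1 *m (v - b1); set A2 := (v - b2)^T *m S2 *m (v - b2).
clearbody P1 P2 Q1 Q2 A1 A2.
move/(congr1 (fun A : 'M[R]_1 => A ord0 ord0)): K1; rewrite /= !mxE => K1.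
move/(congr1 (fun A : 'M[R]_1 => A ord0 ord0)): K2; rewrite /= !mxE eqxx mulr1n => K2.
set x1 := A1 _ _; set x2 := A2 _ _; set y1 := P1 _ _; set y2 := P2 _ _.
set z1 := Q1 _ _; set z2 := Q2 _ _.
rewrite -K2; transitivity (l1 * (n%:R * x1) + l2 * (n%:R * x2) + n%:R * (2 * (l1 * y1 + l2 * y2) + (l1 * z1 + l2 * z2))).
  by ring.
by rewrite K1 mulr0 add0r.
Qed.
End S.

Section C.
Variable R : realType.
Variables (n d' : nat).
Local Notation d := d'.+1.

Definition e : 'cV[R]_d := delta_mx ord0 ord0.
Lemma eE i : e i ord0 = (i == ord0)%:R.
Proof. by rewrite mxE eqxx andbT. Qed.

Definition Mw (w : 'cV[R]_d) : 'M[R]_d := 1%:M + w *m e^T.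

Lemma SwM w : (Mw w)^T *m Mw w =
  1%:M + w *m e^T + e *m w^T + sqnorm w *: (e *m e^T).
Proof.
rewrite /Mw [(_ + _)^T]linearD /= trmx1 trmx_mul trmxK.
rewrite mulmxDl !mulmxDr mul1mx mulmx1 mul1mx.
rewrite !mulmxA -(mulmxA e) sqnormE mul_mx_scalar -scalemxAl.
by rewrite !addrA.
Qed.

Lemma SwE w i j : ((Mw w)^T *m Mw w) i j =
  (i == j)%:R + w i ord0 * e j ord0 + e i ord0 * w j ord0 + sqnorm w * (e i ord0 * e j ord0).
Proof.
rewrite SwM !mxE !big_ord1 !mxE.
done.
Qed.
Hypothesis hdn : (d <= n)%N.
Definition Pm : 'M[R]_(n, d) := \matrix_(i, j) ((i : nat) == j)%:R.
Lemma PtP : Pm^T *m Pm = 1%:M.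
Proof.
apply/matrixP => j k; rewrite !mxE.
rewrite (bigD1 (widen_ord hdn j)) //= !mxE /= eqxx mul1r.
rewrite big1 ?addr0.
  by rewrite eqE /=.
move=> i /negP hi; rewrite !mxE.
case: eqP => [hij|]; last by rewrite mul0r.
by exfalso; apply: hi; apply/eqP/val_inj; rewrite /= hij.
Qed.

Definition Xof (M : 'M[R]_d) : 'M[R]_(n, d) := Num.sqrt (n%:R) *: (Pm *m M).
Lemma n_gt0 : (0 < n)%N.
Proof. exact: leq_trans hdn. Qed.
Lemma SigmaXof M : Sigma (Xof M) = M^T *m M.
Proof.
rewrite /Sigma /Xof [(_ *: _)^T]linearZ /= [(_ *m _)^T]trmx_mul -scalemxAl -scalemxAr scalerA.
rewrite -!mulmxA (mulmxA Pm^T) PtP mul1mx scalerA -mulrA -expr2 sqr_sqrtr ?ler0n //.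
by rewrite mulVf ?scale1r // pnatr_eq0 -lt0n n_gt0.
Qed.
Lemma eTx (x : 'cV[R]_d) : e^T *m x = (x ord0 ord0)%:M.
Proof.
apply/matrixP => i j; rewrite !ord1 !mxE big_ord_recl !mxE /= mul1r mulr1n big1 ?addr0 //.
by move=> k _; rewrite !mxE /= mul0r.
Qed.
Lemma Mw_mul w x : Mw w *m x = x + (x ord0 ord0) *: w.
Proof. by rewrite /Mw mulmxDl mul1mx -mulmxA eTx mul_mx_scalar. Qed.
Lemma sq_comb (vp : 'cV[R]_d) p q : vp ord0 ord0 = 0 ->
  sqnorm (p *: vp + q *: e) = p ^+ 2 * sqnorm vp + q ^+ 2.
Proof.
move=> hv0; rewrite /sqnorm big_ord_recl [in RHS]big_ord_recl !mxE eqxx hv0 /=.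
rewrite expr0n /= add0r mulr0 add0r mulr1 mulr_sumr addrC; congr (_ + _).
by apply: eq_bigr => i _; rewrite !mxE /= mulr0 addr0 exprMn.
Qed.
Lemma Se (S : 'M[R]_d) i : (S *m e) i ord0 = S i ord0.
Proof.
rewrite !mxE big_ord_recl !mxE eqxx mulr1 /= big1 ?addr0 //.
by move=> k _; rewrite !mxE /= mulr0.
Qed.
Lemma x00_le (x : 'cV[R]_d) : x ord0 ord0 ^+ 2 <= sqnorm x.
Proof.
rewrite /sqnorm big_ord_recl lerDl; apply: sumr_ge0 => i _; exact: sqr_ge0.
Qed.
Lemma sparse_e a : one_sparse (a *: e).
Proof.
rewrite /one_sparse; apply: leq_trans (_ : #|[set ord0 : 'I_d]| <= 1)%N; last by rewrite cards1.
apply: subset_leq_card; apply/subsetP => i; rewrite !inE !mxE.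
by case: (i == ord0) => //=; rewrite mulr0 eqxx.
Qed.
End C.

Section Q.
Variable R : realType.
Lemma quadM m (M : 'M[R]_m) x c :
  (x^T *m (M^T *m M - c *: 1%:M) *m x) ord0 ord0 = sqnorm (M *m x) - c * sqnorm x.
Proof.
rewrite mulmxBr mulmxBl -scalemxAr mulmx1 -scalemxAl sqnormE.
have -> : x^T *m (M^T *m M) *m x = (M *m x)^T *m (M *m x) by rewrite trmx_mul !mulmxA.
by rewrite sqnormE !mxE eqxx !mulr1n.
Qed.
Lemma quadM' m (M : 'M[R]_m) x c :
  (x^T *m (c *: 1%:M - M^T *m M) *m x) ord0 ord0 = c * sqnorm x - sqnorm (M *m x).
Proof.
rewrite mulmxBr mulmxBl -scalemxAr mulmx1 -scalemxAl sqnormE.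
have -> : x^T *m (M^T *m M) *m x = (M *m x)^T *m (M *m x) by rewrite trmx_mul !mulmxA.
by rewrite sqnormE !mxE eqxx !mulr1n.
Qed.

Lemma bound m (x w : 'cV[R]_m) s eta : 0 < eta -> eta < 1 ->
  s ^+ 2 <= sqnorm x -> sqnorm w <= eta ^+ 2 ->
  (1 - eta) ^+ 2 * sqnorm x <= sqnorm (x + s *: w) /\
  sqnorm (x + s *: w) <= (1 + eta) ^+ 2 * sqnorm x.
Proof.
move=> e0 e1 hs hw.
have EN : sqnorm (x + s *: w) = \sum_i (x i ord0 + s * w i ord0) ^+ 2.
  by apply: eq_bigr => i _; rewrite !mxE.
have L : \sum_i (eta * (1 - eta) * x i ord0 ^+ 2 - (1 - eta) * s ^+ 2 * w i ord0 ^+ 2)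
   <= \sum_i eta * (x i ord0 + s * w i ord0) ^+ 2.
  by apply: ler_sum => i _; have := sqr_ge0 (eta * x i ord0 + s * w i ord0); nra.
have U : \sum_i eta * (x i ord0 + s * w i ord0) ^+ 2 <=
   \sum_i (eta * (1 + eta) * x i ord0 ^+ 2 + (1 + eta) * s ^+ 2 * w i ord0 ^+ 2).
  by apply: ler_sum => i _; have := sqr_ge0 (eta * x i ord0 - s * w i ord0); nra.
rewrite sumrB big_split /= -!mulr_sumr -EN in L U.
rewrite -/(sqnorm x) -/(sqnorm w) in L U.
have X0 := sqnorm_ge0 x; have W0 := sqnorm_ge0 w.
have s0 : 0 <= s ^+ 2 by rewrite sqr_ge0.
have SW : s ^+ 2 * sqnorm w <= sqnorm x * eta ^+ 2 by nra.
have e1' : 0 <= 1 - eta by lra.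
have SW1 : (1 - eta) * (s ^+ 2 * sqnorm w) <= (1 - eta) * (sqnorm x * eta ^+ 2) by rewrite ler_wpM2l.
have SW2 : (1 + eta) * (s ^+ 2 * sqnorm w) <= (1 + eta) * (sqnorm x * eta ^+ 2) by rewrite ler_wpM2l //; lra.
split; rewrite -(ler_pM2l e0); nra.
Qed.
Lemma entry2 m p (A B : 'M[R]_(m,p)) (x y : R) i j :
  (x *: A + y *: B) i j = x * A i j + y * B i j.
Proof. by rewrite !mxE. Qed.
Lemma scal_entry m p (A : 'M[R]_(m,p)) (x : R) i j : (x *: A) i j = x * A i j.
Proof. by rewrite mxE. Qed.
Lemma col_entry m p (A : 'M[R]_(m,p)) j i k : (col j A) i k = A i j.
Proof. by rewrite mxE. Qed.
End Q.

Section M.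
Variable R : realType.
Lemma sqnorm_eq0 m (u : 'cV[R]_m) : sqnorm u = 0 -> u = 0.
Proof.
move=> /eqP; rewrite psumr_eq0 => [/allP H|i _]; last exact: sqr_ge0.
apply/matrixP => i j; rewrite !ord1 mxE.
by have := H i (mem_index_enum i); rewrite sqrf_eq0 => /eqP.
Qed.

Lemma argmin_of n d (l1 l2 : R) (X1 X2 : 'M[R]_(n,d)) b1 b2 v : (0 < n)%N ->
  l1 *: Sigma X1 + l2 *: Sigma X2 = 1%:M ->
  l1 *: (Sigma X1 *m b1) + l2 *: (Sigma X2 *m b2) = v ->
  is_argmin2 l1 l2 X1 X2 b1 b2 v.
Proof.
move=> n0 H1 H2; split => t; rewrite (@obj_dec _ n d l1 l2 X1 X2 b1 b2 v t n0 H1 H2).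
  by rewrite lerDl mulr_ge0 ?ler0n ?sqnorm_ge0.
rewrite gerDl => h.
have : sqnorm (t - v) = 0.
  apply/eqP; rewrite eq_le sqnorm_ge0 andbT.
  by rewrite -(ler_pM2l (_ : 0 < n%:R)) ?mulr0 // ltr0n.
by move/sqnorm_eq0/eqP; rewrite subr_eq0 => /eqP.
Qed.
End M.

Section Main.
Variable R : realType.
Lemma claim_succ (n d' : nat) (gamma l1 l2 : R)
  (hdn : (d'.+1 <= n)%N) (hgamma : 1 < gamma)
  (hl1 : 0 < l1) (hl2 : 0 < l2) (hl : l1 + l2 = 1)
  (v : 'cV[R]_d'.+1) :
  exists (X1 X2 : 'M[R]_(n, d'.+1)) (b1 b2 : 'cV[R]_d'.+1),
    [/\ Xclass gamma X1 /\ Xclass gamma X2, one_sparse b1 /\ one_sparse b2,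
        l1 *: Sigma X1 + l2 *: Sigma X2 = 1%:M,
        l1 *: (Sigma X1 *m b1) + l2 *: (Sigma X2 *m b2) = v
      & is_argmin2 l1 l2 X1 X2 b1 b2 v].
Proof.
pose v0 := v ord0 ord0.
pose vp := v - v0 *: e R d'.
have vp0 : vp ord0 ord0 = 0 by rewrite !mxE eqxx mulr1 subrr.
have vE i : v i ord0 = vp i ord0 + v0 * e R d' i ord0 by rewrite !mxE subrK.
pose rho := sqnorm vp.
have rho0 : 0 <= rho := sqnorm_ge0 vp.
pose k := l1 / l2.
have k0 : 0 < k by rewrite divr_gt0.
pose eta := (gamma - 1) / (4 * gamma).
have g0 : 0 < gamma by lra.
have heta : eta * (4 * gamma) = gamma - 1 by rewrite /eta mulfVK // mulf_neq0 // ?gt_eqF.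
have eta0 : 0 < eta by rewrite /eta divr_gt0 // ?subr_gt0 // mulr_gt0.
have eta1 : eta < 1 by nra.
pose m0 := eta ^+ 2 / (2 * (1 + k) ^+ 2).
have k1 : 0 < 1 + k by lra.
have m00 : 0 < m0.
  by apply: divr_gt0; [exact: exprn_gt0 | apply: mulr_gt0 => //; exact: exprn_gt0].
have hm0 : m0 * (2 * (1 + k) ^+ 2) = eta ^+ 2 by rewrite /m0 mulfVK // mulf_neq0 // ?expf_neq0 //; lra.
pose c := m0 / (1 + rho).
have c0 : 0 < c by rewrite /c divr_gt0 //; lra.
have hc : c * (1 + rho) = m0 by rewrite /c mulfVK //; lra.
pose mu := c ^+ 2 * rho.
have mu0 : 0 <= mu by rewrite /mu mulr_ge0 // sqr_ge0.
have m01 : m0 <= 1 / 2.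
  have : 1 <= (1 + k) ^+ 2 by nra.
  nra.
have cm0 : c <= m0 by nra.
have mum0 : mu <= m0 by rewrite /mu; nra.
have kmu1 : k * mu <= 1.
  have : k * m0 <= 1 by nra.
  nra.
pose s := Num.sqrt (1 - k * mu).
have s0 : 0 <= s := sqrtr_ge0 _.
have s2 : s ^+ 2 = 1 - k * mu by rewrite sqr_sqrtr // subr_ge0.
pose alpha := s - 1.
have hmu : mu = - (alpha ^+ 2 + 2 * alpha) / k.
  have kn0 : k != 0 by rewrite gt_eqF.
  apply: (mulfI kn0); rewrite [RHS]mulrC divfK //.
  have : alpha ^+ 2 + 2 * alpha = s ^+ 2 - 1 by rewrite /alpha; ring.
  by move=> ->; rewrite s2; ring.
have kmu0 : 0 <= k * mu by rewrite mulr_ge0 // ltW.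
have s1 : s <= 1.
  have : s ^+ 2 <= 1 by rewrite s2; lra.
  nra.
have al0 : alpha <= 0 by rewrite /alpha; lra.
have al1 : - (k * mu) <= alpha.
  have : s ^+ 2 <= s by nra.
  rewrite /alpha; lra.
have alsq : alpha ^+ 2 <= (k * mu) ^+ 2 by nra.
pose w1 := c *: vp + alpha *: e R d'.
pose w2 := (- (k * c)) *: vp + alpha *: e R d'.
have nw1 : sqnorm w1 = mu + alpha ^+ 2 by rewrite sq_comb.
have nw2 : sqnorm w2 = k ^+ 2 * mu + alpha ^+ 2.
  by rewrite sq_comb // /mu -/rho; ring.
have bw1 : sqnorm w1 <= eta ^+ 2.
  rewrite nw1 -hm0.
  have : (k * mu) ^+ 2 <= k ^+ 2 * mu by nra.
  nra.
have bw2 : sqnorm w2 <= eta ^+ 2.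
  rewrite nw2 -hm0.
  have : (k * mu) ^+ 2 <= k ^+ 2 * mu by nra.
  nra.
have hlo : gamma^-1 <= (1 - eta) ^+ 2.
  rewrite -(ler_pM2l g0) mulfV ?gt_eqF //; nra.
have hup : (1 + eta) ^+ 2 <= gamma by nra.
have XC (w : 'cV[R]_d'.+1) : sqnorm w <= eta ^+ 2 -> Xclass gamma (Xof n (Mw w)).
  move=> bw; split => x; rewrite (@SigmaXof R n d' hdn).
    rewrite quadM Mw_mul; have [lo _] := bound eta0 eta1 (x00_le x) bw.
    have := sqnorm_ge0 x; nra.
  rewrite quadM' Mw_mul; have [_ up] := bound eta0 eta1 (x00_le x) bw.
  have := sqnorm_ge0 x; nra.
pose t := (l1 * c)^-1.
pose a := v0 + l2 * t * ((1 + alpha) ^+ 2 + k ^+ 2 * mu).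
pose b := a - t.
have hl2' : l2 = 1 - l1 by lra.
have l1n : l1 != 0 by rewrite gt_eqF.
have l2n : 1 - l1 != 0 by rewrite -hl2' gt_eqF.
have cn : c != 0 by rewrite gt_eqF.
have E1 : l1 *: Sigma (Xof n (Mw w1)) + l2 *: Sigma (Xof n (Mw w2)) = 1%:M.
  rewrite !(@SigmaXof R n d' hdn); apply/matrixP => i j; rewrite entry2 !SwE nw1 nw2 hmu /w1 /w2.
  clearbody vp; rewrite !mxE eqxx !andbT /k hl2'.
  field; apply/andP; split => //.
have E2 : l1 *: (Sigma (Xof n (Mw w1)) *m (a *: e R d')) +
          l2 *: (Sigma (Xof n (Mw w2)) *m (b *: e R d')) = v.
  rewrite !(@SigmaXof R n d' hdn) -!scalemxAr -!colE; apply/matrixP => i j.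
  rewrite ord1 entry2 !scal_entry !col_entry !SwE nw1 nw2 vE /b /a /t hmu /w1 /w2.
  clearbody vp; rewrite !mxE vp0 !eqxx !andbT /k hl2'.
  have t1 : (true%:R : R) = 1 by [].
  by rewrite !t1; field; rewrite ?l1n ?cn ?l2n.
exists (Xof n (Mw w1)), (Xof n (Mw w2)), (a *: e R d'), (b *: e R d').
split => //.
- by split; apply: XC.
- by split; apply: sparse_e.
- by apply: argmin_of => //; apply: leq_trans hdn.
Qed.

Lemma claim_zero (n : nat) (gamma l1 l2 : R) (v : 'cV[R]_0) :
  exists (X1 X2 : 'M[R]_(n, 0)) (b1 b2 : 'cV[R]_0),
    [/\ Xclass gamma X1 /\ Xclass gamma X2, one_sparse b1 /\ one_sparse b2,
        l1 *: Sigma X1 + l2 *: Sigma X2 = 1%:M,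
        l1 *: (Sigma X1 *m b1) + l2 *: (Sigma X2 *m b2) = v
      & is_argmin2 l1 l2 X1 X2 b1 b2 v].
Proof.
have z0 (m : nat) (A B : 'M[R]_(m, 0)) : A = B by apply/matrixP => i [].
have z1 (m : nat) (A B : 'M[R]_(0, m)) : A = B by apply/matrixP => [] [].
have ps (A : 'M[R]_0) : psd A.
  by move=> x; rewrite mxE big_ord0.
exists 0; exists 0; exists 0; exists 0; split.
- by split; split; apply: ps.
- by split; rewrite /one_sparse (leq_trans (max_card _)) // card_ord.
- exact: z1.
- exact: z1.
- split => t; last by move=> _; apply: z1.
  by rewrite (z1 1 t v).
Qed.
End Main.

Unset Implicit Arguments.
Theorem claimD1 (R : realType) (n d : nat) (gamma l1 l2 : R)
  (hdn : (d <= n)%N) (hgamma : 1 < gamma)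
  (hl1 : 0 < l1) (hl2 : 0 < l2) (hl : l1 + l2 = 1)
  (v : 'cV[R]_d) (hv : norm2 v <= 1) :
  exists (X1 X2 : 'M[R]_(n, d)) (b1 b2 : 'cV[R]_d),
    [/\ Xclass gamma X1 /\ Xclass gamma X2, one_sparse b1 /\ one_sparse b2,
        l1 *: Sigma X1 + l2 *: Sigma X2 = 1%:M,
        l1 *: (Sigma X1 *m b1) + l2 *: (Sigma X2 *m b2) = v
      & is_argmin2 l1 l2 X1 X2 b1 b2 v].
Proof.
move: hdn v hv; case: d => [|d'] hdn v _.
  exact: claim_zero.
exact: claim_succ.
Qed.
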